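(* Let $n\ge 1$ and let $U$ be a matchgate unitary on $n$ qubits with associated orthogonal matrix $\mathbf{u}\in \mathbf{SO}(2n)$, i.e. $U^\dagger c_\mu U=\sum_{\nu=1}^{2n}u_{\mu\nu}c_\nu$ for all $\mu\in\{1,\dots,2n\}$. Let $\vec\eta$ and $\vec\alpha$ be Majorana configurations and let $a,b$ be integers such that $A\equiv i^aC_{\vec\eta}$ and $B\equiv i^bC_{\vec\alpha}$ are Hermitian (Pauli observables). Then $$\frac{1}{2^{n+2}}\big\|[A,U^\dagger BU]\big\|^2=\frac12\Big\{1+(-1)^{|\vec\alpha||\vec\eta|+1}\det\big[\mathbf{u}_{\vec\alpha[2n]}(\mathbf{I}-2\mathbf{P}_{\vec\eta})\mathbf{u}^{\mathrm T}_{[2n]\vec\alpha}\big]\Big\},$$ where $\|\cdot\|$ is the Frobenius norm, $\mathbf I$ is the $2n\times 2n$ identity, and $\mathbf{P}_{\vec\eta}$ is the $2n\times 2n$ diagonal matrix with $(\mathbf{P}_{\vec\eta})_{jk}=\delta_{jk}$ if $j,k\in\vec\eta$ and $0$ otherwise (the projector onto the modes $\vec\eta$).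
   Context: On $n$ qubits with Pauli operators $X_k,Y_k,Z_k$, the Majorana operators are $c_{2k-1}=Z_1\cdots Z_{k-1}X_k$ and $c_{2k}=Z_1\cdots Z_{k-1}Y_k$ for $k=1,\dots,n$; they satisfy $c_\mu^2=I$, $c_\mu c_\nu=-c_\nu c_\mu$ for $\mu\ne\nu$. A Majorana configuration is an ordered tuple $\vec\alpha=(\alpha_1,\dots,\alpha_k)$ with $1\le\alpha_1<\alpha_2<\dots<\alpha_k\le 2n$, of degree $|\vec\alpha|=k$; the configuration operator is $C_{\vec\alpha}=c_{\alpha_1}c_{\alpha_2}\cdots c_{\alpha_k}$. $[2n]=(1,2,\dots,2n)$. For a matrix $\mathbf u$ and tuples $\vec\alpha,\vec\beta$, $\mathbf{u}_{\vec\alpha\vec\beta}$ is the submatrix with $(\mathbf{u}_{\vec\alpha\vec\beta})_{jk}=u_{\alpha_j\beta_k}$, and $\mathbf{u}^{\mathrm T}_{\vec\beta\vec\alpha}$ denotes $(\mathbf{u}_{\vec\alpha\vec\beta})^{\mathrm T}$. A matchgate unitary is a unitary $U$ on $n$ qubits (equivalently, a circuit of nearest-neighbour matchgates, i.e. generated by Hamiltonians quadratic in the Majorana operators) for which there is $\mathbf u\in\mathbf{SO}(2n)$ with $U^\dagger c_\mu U=\sum_\nu u_{\mu\nu}c_\nu$. The Frobenius norm is $\|O\|^2=\mathrm{tr}(O^\dagger O)$. *)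

(* Defs.v *)
(* Scalars: an arbitrary numClosedFieldType C (e.g. algC, or
   R[i] for a real closed field R, in particular the complex numbers). *)
From HB Require Import structures.
From mathcomp Require Import all_boot all_order all_algebra.
From mathcomp Require Import mxtens.
Set Implicit Arguments. Unset Strict Implicit. Unset Printing Implicit Defensive.
Import Order.TTheory GRing.Theory Num.Theory.
Local Open Scope ring_scope.

(* dim2 n = 2^n, defined recursively so that the Kronecker product
   'M_2 *t 'M_(dim2 n) has type 'M_(dim2 n.+1) without casts. *)
Fixpoint dim2 (n : nat) : nat := if n is k.+1 then (2 * dim2 k)%N else 1%N.

Section Qubits.
Variable C : numClosedFieldType.

Definition adj {m p : nat} (A : 'M[C]_(m, p)) : 'M[C]_(p, m) := (map_mx Num.conj A)^T.

(* single-qubit Pauli matrices, basis order |0>, |1> *)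
Definition PauliI : 'M[C]_2 := 1%:M.
Definition PauliX : 'M[C]_2 := \matrix_(i < 2, j < 2) (if i == j then 0 else 1).
Definition PauliY : 'M[C]_2 :=
  \matrix_(i < 2, j < 2)
    (if i == j then 0 else if (i : nat) == 0%N then - 'i else 'i).
Definition PauliZ : 'M[C]_2 :=
  \matrix_(i < 2, j < 2) (if i == j then (if (i : nat) == 0%N then 1 else -1) else 0).

(* tensor product f 0 (x) f 1 (x) ... (x) f (n-1); f k acts on qubit k+1 *)
Fixpoint pauli_string (n : nat) (f : nat -> 'M[C]_2) : 'M[C]_(dim2 n) :=
  match n return 'M[C]_(dim2 n) with
  | 0 => 1%:M
  | k.+1 => f 0%N *t pauli_string k (fun j => f j.+1)
  end.

(* Majorana operators, 0-based index mu : 'I_(2n).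
   mu = 2(k-1)   (i.e. c_{2k-1}) = Z_1 ... Z_{k-1} X_k,
   mu = 2(k-1)+1 (i.e. c_{2k})   = Z_1 ... Z_{k-1} Y_k. *)
Definition majorana (n : nat) (mu : 'I_(2 * n)) : 'M[C]_(dim2 n) :=
  let q := (mu %/ 2)%N in
  pauli_string n (fun j =>
    if (j < q)%N then PauliZ
    else if j == q then (if odd mu then PauliY else PauliX)
    else PauliI).

Definition majorana_config (n : nat) (s : seq 'I_(2 * n)) : bool :=
  sorted (fun x y : 'I_(2 * n) => (x < y)%N) s.

Definition config_op (n : nat) (s : seq 'I_(2 * n)) : 'M[C]_(dim2 n) :=
  foldr (fun mu M => majorana mu *m M) 1%:M s.

Definition rowsub_seq (n : nat) (u : 'M[C]_(2 * n)) (s : seq 'I_(2 * n))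
  : 'M[C]_(size s, 2 * n) :=
  \matrix_(j < size s, l < 2 * n) u (nth l s j) l.

Definition proj_modes (n : nat) (s : seq 'I_(2 * n)) : 'M[C]_(2 * n) :=
  diag_mx (\row_(j < 2 * n) (if j \in s then 1 else 0)).

Definition frob2 {m : nat} (O : 'M[C]_m) : C := \tr (adj O *m O).

Definition commutator {m : nat} (A B : 'M[C]_m) : 'M[C]_m := A *m B - B *m A.

End Qubits.

(* Main.v *)
Require Import Defs.
From HB Require Import structures.
From mathcomp Require Import all_boot all_order all_algebra.
From mathcomp Require Import mxtens zify ring.
Set Implicit Arguments. Unset Strict Implicit. Unset Printing Implicit Defensive.
Import Order.TTheory GRing.Theory Num.Theory.
Local Open Scope ring_scope.

Section P.
Variable C : numClosedFieldType.

Lemma tens11 m p : (1%:M : 'M[C]_m) *t (1%:M : 'M[C]_p) = 1%:M.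
Proof.
apply/matrixP=> i j.
case: (mxtens_indexP i)=> i0 i1; case: (mxtens_indexP j)=> j0 j1.
rewrite tensmxE !mxE -natrM mulnb; congr (_ %:R); congr nat_of_bool.
apply/idP/idP.
  by case/andP=> /eqP -> /eqP ->.
by move/eqP/(can_inj (@mxtens_indexK _ _)) => [-> ->]; rewrite !eqxx.
Qed.

Lemma tensNmx m n p q (A : 'M[C]_(m,n)) (B : 'M[C]_(p,q)) : (- A) *t B = - (A *t B).
Proof. by apply/matrixP=> i j; rewrite !mxE mulNr. Qed.
Lemma tensmxN m n p q (A : 'M[C]_(m,n)) (B : 'M[C]_(p,q)) : A *t (- B) = - (A *t B).
Proof. by apply/matrixP=> i j; rewrite !mxE mulrN. Qed.

Lemma adj_tens m n p q (A : 'M[C]_(m,n)) (B : 'M[C]_(p,q)) : adj (A *t B) = adj A *t adj B.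
Proof. by apply/matrixP=> i j; rewrite !mxE rmorphM. Qed.

Lemma adj1 m : adj (1%:M : 'M[C]_m) = 1%:M.
Proof. by apply/matrixP=> i j; rewrite !mxE eq_sym rmorph_nat. Qed.

Lemma ps_mul n f g : pauli_string n f *m pauli_string n g = pauli_string n (fun j => f j *m g j) :> 'M[C]_(dim2 n).
Proof.
elim: n f g => [|n IH] f g /=; first by rewrite mul1mx.
by rewrite tensmx_mul IH.
Qed.

Lemma ps_ext n f g : (forall j, (j < n)%N -> f j = g j) -> pauli_string n f = pauli_string n g :> 'M[C]_(dim2 n).
Proof.
elim: n f g => [|n IH] f g H //=.
rewrite H // (IH _ (fun j => g j.+1)) // => j Hj; exact: H.
Qed.

Lemma ps_one n f : (forall j, (j < n)%N -> f j = 1%:M) -> pauli_string n f = 1%:M :> 'M[C]_(dim2 n).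
Proof.
elim: n f => [|n IH] f H //=.
by rewrite H // IH ?tens11 // => j Hj; exact: H.
Qed.

Lemma ps_neg n f g k : (k < n)%N -> (forall j, (j < n)%N -> j != k -> f j = g j) -> f k = - g k ->
  pauli_string n f = - pauli_string n g :> 'M[C]_(dim2 n).
Proof.
elim: n f g k => [|n IH] f g k // Hk H Hfk /=.
case: k Hk H Hfk => [|k] Hk H Hfk.
  rewrite Hfk tensNmx (ps_ext (g := fun j => g j.+1)) // => j Hj; exact: H.
rewrite H // (IH _ (fun j => g j.+1) k) ?tensmxN // => j Hj Hjk; apply: H => //.
Qed.

Lemma adj_ps n f : adj (pauli_string n f) = pauli_string n (fun j => adj (f j)) :> 'M[C]_(dim2 n).
Proof.
elim: n f => [|n IH] f /=; first exact: adj1.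
by rewrite adj_tens IH.
Qed.
Lemma iiC : 'i * 'i = -1 :> C. Proof. by rewrite -expr2 sqrCi. Qed.

Ltac m2 := apply/matrixP; case=> [[|[|?]] ?] //; case=> [[|[|?]] ?] //; rewrite !mxE ?big_ord_recl ?big_ord0 /=; rewrite ?mxE /=;
  rewrite ?rmorph0 ?rmorph1 ?conjCi ?rmorphN /= ?conjCi ?rmorph1 ?mulrNN ?mulr0 ?mul0r ?mulr1 ?mul1r ?addr0 ?add0r ?mulNr ?mulrN ?iiC ?opprK ?oppr0; rewrite ?rmorph0 ?rmorph1 ?conjCi ?rmorphN /= ?conjCi ?rmorph1 ?mulrNN ?mulr0 ?mul0r ?mulr1 ?mul1r ?addr0 ?add0r ?mulNr ?mulrN ?iiC ?opprK ?oppr0 //.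

Lemma XX : PauliX C *m PauliX C = 1%:M. Proof. by m2. Qed.
Lemma YY : PauliY C *m PauliY C = 1%:M. Proof. by m2. Qed.
Lemma ZZ : PauliZ C *m PauliZ C = 1%:M. Proof. by m2. Qed.
Lemma XZ : PauliX C *m PauliZ C = - (PauliZ C *m PauliX C). Proof. by m2. Qed.
Lemma YZ : PauliY C *m PauliZ C = - (PauliZ C *m PauliY C). Proof. by m2. Qed.
Lemma XY : PauliX C *m PauliY C = - (PauliY C *m PauliX C). Proof. by m2. Qed.
Lemma aX : adj (PauliX C) = PauliX C. Proof. by rewrite /adj; m2. Qed.
Lemma aY : adj (PauliY C) = PauliY C. Proof. by rewrite /adj; m2. Qed.
Lemma aZ : adj (PauliZ C) = PauliZ C. Proof. by rewrite /adj; m2. Qed.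
Lemma aI : adj (PauliI C) = PauliI C. Proof. by rewrite /adj /PauliI; m2. Qed.

Lemma maj_sq n (mu : 'I_(2 * n)) : majorana C mu *m majorana C mu = 1%:M.
Proof.
rewrite /majorana ps_mul ps_one // => j _.
case: ifP => _; first exact: ZZ.
case: ifP => _; last by rewrite /PauliI mul1mx.
by case: (odd mu); [exact: YY | exact: XX].
Qed.

Lemma maj_anti_lt n (mu nu : 'I_(2 * n)) : (mu < nu)%N ->
  majorana C mu *m majorana C nu = - (majorana C nu *m majorana C mu).
Proof.
move=> lt; rewrite /majorana !ps_mul.
set q := (mu %/ 2)%N; set r := (nu %/ 2)%N.
have qr : (q <= r)%N by rewrite leq_div2r // ltnW.
have qn : (q < n)%N by rewrite ltn_divLR // [(n * 2)%N]mulnC.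
apply: (ps_neg (k := q)) => //.
  move=> j _ jq.
  case: (ltnP j q) => [jq'|qj].
    by rewrite (leq_trans jq' qr).
  rewrite (negbTE jq) /PauliI mul1mx mulmx1 //.
have [qr'|] := ltnP q r.
  rewrite ltnn eqxx.
  by case: (odd mu); [exact: YZ | exact: XZ].
move=> rq; have qr2 : q = r by apply/eqP; rewrite eqn_leq qr rq.
rewrite ltnn !eqxx -qr2 eqxx.
have emu := odd_double_half mu; have enu := odd_double_half nu.
rewrite -!divn2 -/q -/r -qr2 in emu enu.
have H : (odd mu < odd nu)%N by move: lt; rewrite -{1}emu -{1}enu ltn_add2r.
by case: (odd mu) (odd nu) H => [] [] //= _; exact: XY.
Qed.

Lemma maj_anti n (mu nu : 'I_(2 * n)) : mu != nu ->
  majorana C mu *m majorana C nu = - (majorana C nu *m majorana C mu).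
Proof.
move=> ne; have [lt|gt|eq] := ltngtP mu nu.
- exact: maj_anti_lt.
- by rewrite (maj_anti_lt gt) opprK.
- by move: ne; rewrite (val_inj eq) eqxx.
Qed.

Lemma maj_herm n (mu : 'I_(2 * n)) : adj (majorana C mu) = majorana C mu.
Proof.
rewrite /majorana adj_ps; apply: ps_ext => j _.
case: ifP => _; first exact: aZ.
case: ifP => _; last exact: aI.
by case: (odd mu); [exact: aY | exact: aX].
Qed.

Lemma maj_acomm n (mu nu : 'I_(2 * n)) :
  majorana C mu *m majorana C nu + majorana C nu *m majorana C mu
  = (2 * (mu == nu)%:R) *: 1%:M.
Proof.
case: (eqVneq mu nu) => [->|ne].
  by rewrite maj_sq mulr1 scaler_nat mulr2n.
by rewrite maj_anti // addNr mulr0 scale0r.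
Qed.

Definition cv n (x : 'rV[C]_(2 * n)) : 'M[C]_(dim2 n) :=
  \sum_nu x 0 nu *: majorana C nu.
Definition dot N (x y : 'rV[C]_N) : C := (x *m y^T) 0 0.
Definition Pl n (s : seq 'rV[C]_(2 * n)) : 'M[C]_(dim2 n) :=
  foldr (fun v M => cv v *m M) 1%:M s.

Lemma cv_mul n (a b : 'rV[C]_(2 * n)) : cv a *m cv b =
  \sum_mu \sum_nu (a 0 mu * b 0 nu) *: (majorana C mu *m majorana C nu).
Proof.
rewrite /cv mulmx_suml; apply: eq_bigr => mu _.
rewrite -scalemxAl mulmx_sumr scaler_sumr; apply: eq_bigr => nu _.
by rewrite -scalemxAr scalerA.
Qed.

Lemma cv_acomm n (x y : 'rV[C]_(2 * n)) :
  cv x *m cv y + cv y *m cv x = (2 * dot x y) *: 1%:M.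
Proof.
rewrite !cv_mul [X in _ + X]exchange_big -big_split /=.
under eq_bigr do rewrite -big_split /=.
under eq_bigr do under eq_bigr do rewrite [y 0 _ * _]mulrC -scalerDr maj_acomm scalerA.
rewrite (eq_bigr (fun mu => (2 * (x 0 mu * y 0 mu)) *: 1%:M)).
  by rewrite -scaler_suml -mulr_sumr /dot mxE; congr (_ *: _); congr (_ * _);
     apply: eq_bigr => i _; rewrite mxE.
move=> mu _; rewrite -scaler_suml; congr (_ *: _).
rewrite (bigD1 mu) //= big1 ?addr0 ?eqxx ?mulr1 1?mulrC //.
by move=> nu /negbTE; rewrite eq_sym => ->; rewrite mulr0 mulr0.
Qed.

Definition remn T (j : nat) (s : seq T) := take j s ++ drop j.+1 s.

Lemma pass n (x : 'rV[C]_(2 * n)) ys : cv x *m Pl ys =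
  \sum_(j < size ys) ((-1) ^+ j * (2 * dot x (nth 0 ys j))) *: Pl (remn j ys)
  + (-1) ^+ (size ys) *: (Pl ys *m cv x).
Proof.
elim: ys => [|y ys IH] /=.
  by rewrite big_ord0 add0r expr0 scale1r mulmx1 mul1mx.
have E : cv x *m cv y = (2 * dot x y) *: 1%:M - cv y *m cv x.
  by rewrite -cv_acomm addrK.
rewrite mulmxA E mulmxBl -scalemxAl mul1mx -[cv y *m cv x *m _]mulmxA IH.
rewrite big_ord_recl /= expr0 mul1r /remn /= drop0.
rewrite mulmxDr mulmx_sumr opprD addrA; congr (_ + _ + _).
  rewrite -sumrN; apply: eq_bigr => j _.
  by rewrite -scalemxAr exprS mulN1r mulNr scaleNr.
by rewrite -scalemxAr exprS mulN1r scaleNr mulmxA.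
Qed.

Lemma two_neq0 : (2 : C) != 0.
Proof. by rewrite pnatr_eq0. Qed.

Lemma tr_pass n (x : 'rV[C]_(2 * n)) ys : odd (size ys) ->
  \tr (cv x *m Pl ys) =
  \sum_(j < size ys) ((-1) ^+ j * dot x (nth 0 ys j)) * \tr (Pl (remn j ys)).
Proof.
move=> odd_s.
have := congr1 mxtrace (pass x ys).
rewrite mxtraceD mxtraceZ [\tr (Pl ys *m _)]mxtrace_mulC -signr_odd odd_s expr1 mulN1r.
rewrite raddf_sum /= => H.
set t := \tr (cv x *m Pl ys) in H *.
set S := \sum_(j < size ys) _.
have H2 : t * 2 = S * 2.
  rewrite mulr_natr mulr2n {1}H addrNK mulr_suml; apply: eq_bigr => j _.
  by rewrite mxtraceZ mulrA [_ * 2]mulrC !mulrA [_ * 2]mulrC.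
by apply: (mulIf two_neq0).
Qed.

Lemma nth_remn T (x0 : T) j s i : (j < size s)%N ->
  nth x0 (remn j s) i = nth x0 s (bump j i).
Proof.
move=> js; rewrite /remn nth_cat size_takel; last exact: ltnW.
rewrite /bump.
case: (ltnP i j) => [ij|ji].
  by rewrite nth_take // add0n.
by rewrite nth_drop addSn subnKC.
Qed.
Lemma size_remn T j (s : seq T) : (j < size s)%N -> size (remn j s) = (size s).-1.
Proof.
move=> js; rewrite /remn size_cat size_takel; last exact: ltnW.
rewrite size_drop; lia. Qed.
End P.

Section W.
Variable C : numClosedFieldType.

Definition gram N k (vs ws : seq 'rV[C]_N) : 'M[C]_k :=
  \matrix_(i < k, j < k) dot (nth 0 vs i) (nth 0 ws j).

Fixpoint eps (k : nat) : C := if k is k'.+1 then (-1) ^+ k' * eps k' else 1.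

Lemma wick n k : forall vs ws : seq 'rV[C]_(2 * n),
  size vs = k -> size ws = k ->
  (forall i j, (i < k)%N -> (j < k)%N -> i != j -> dot (nth 0 vs i) (nth 0 vs j) = 0) ->
  \tr (Pl (vs ++ ws)) = eps k * \tr (1%:M : 'M[C]_(dim2 n)) * \det (gram k vs ws).
Proof.
elim: k => [|k IH] vs ws Hv Hw Ho.
  by case: vs Hv Ho => // _ _; case: ws Hw => // _; rewrite det_mx00 /= mul1r mulr1.
case: vs Hv Ho => // v vs' [Hv'] Ho.
rewrite cat_cons /= tr_pass; last first.
  by rewrite size_cat Hv' Hw addnS addnn /= odd_double.
rewrite size_cat Hv' Hw big_split_ord /=.
rewrite big1 ?add0r; last first.
  move=> j _; rewrite nth_cat Hv' ltn_ord.
  by have := Ho 0%N j.+1 (ltn0Sn _) (ltn_ord j) isT; rewrite /= => ->; rewrite mulr0 mul0r.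
rewrite (expand_det_row _ ord0) mulr_sumr; apply: eq_bigr => i _.
have E1 : (vs' ++ ws)`_(k + i) = ws`_i.
  by rewrite nth_cat Hv' ltnNge leq_addr /= addKn.
have E2 : remn (k + i) (vs' ++ ws) = vs' ++ remn i ws.
  rewrite /remn take_cat drop_cat Hv' ltnNge leq_addr /= -addnS ltnNge leq_addr /=.
  by rewrite !addKn catA.
have Hs : size (remn i ws) = k by rewrite size_remn Hw.
rewrite E1 E2 (IH _ _ Hv' Hs); last first.
  move=> a b ak bk ab; exact: (Ho a.+1 b.+1).
have E3 : row' ord0 (col' i (gram k.+1 (v :: vs') ws)) = gram k vs' (remn i ws).
  apply/matrixP => a b; rewrite !mxE /= nth_remn ?Hw //.
rewrite /cofactor E3 !mxE /= add0n exprD; ring.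
Qed.
End W.

Section M.
Variable C : numClosedFieldType.

Lemma adj_mul m p q (A : 'M[C]_(m, p)) (B : 'M[C]_(p, q)) : adj (A *m B) = adj B *m adj A.
Proof. by rewrite /adj map_mxM trmx_mul. Qed.
Lemma adj_scale m p (a : C) (A : 'M[C]_(m, p)) : adj (a *: A) = a^* *: adj A.
Proof. by apply/matrixP=> i j; rewrite !mxE rmorphM. Qed.
Lemma adjB m p (A B : 'M[C]_(m, p)) : adj (A - B) = adj A - adj B.
Proof. by apply/matrixP=> i j; rewrite !mxE rmorphB. Qed.
Lemma adjK m p (A : 'M[C]_(m, p)) : adj (adj A) = A.
Proof. by apply/matrixP=> i j; rewrite !mxE conjCK. Qed.

Lemma adj_config n (s : seq 'I_(2 * n)) : adj (config_op C s) *m config_op C s = 1%:M.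
Proof.
elim: s => [|mu s IH] /=; first by rewrite adj1 mul1mx.
rewrite adj_mul maj_herm mulmxA -[adj _ *m _ *m _]mulmxA maj_sq mulmx1 IH //.
Qed.

Lemma ipow_norm (c : int) : ('i ^ c)^* * 'i ^ c = 1 :> C.
Proof.
have iu : ('i : C) \is a GRing.unit by rewrite unitfE neq0Ci.
rewrite (rmorphXz _ _ iu) /= conjCi -expfzMl mulNr -expr2 sqrCi opprK exp1rz //.
Qed.

Lemma herm_sq n (z : C) (s : seq 'I_(2 * n)) (Hz : z^* * z = 1) :
  adj (z *: config_op C s) = z *: config_op C s ->
  (z *: config_op C s) *m (z *: config_op C s) = 1%:M.
Proof.
move=> H; rewrite -{1}H adj_scale -scalemxAl -scalemxAr scalerA Hz scale1r.
exact: adj_config.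
Qed.

Lemma config_comm n (s : seq 'I_(2 * n)) (nu : 'I_(2 * n)) :
  config_op C s *m majorana C nu
  = (-1) ^+ (size s + count_mem nu s) *: (majorana C nu *m config_op C s).
Proof.
elim: s => [|mu s IH] /=; first by rewrite mulmx1 mul1mx add0n expr0 scale1r.
rewrite -mulmxA IH -scalemxAr [majorana C mu *m (_ *m _)]mulmxA.
case: (eqVneq mu nu) => [->|ne] /=.
  by rewrite ?eqxx /= addSn add1n addnS !exprS !mulN1r opprK mulmxA.
rewrite maj_anti // add0n addSn exprS mulN1r scaleNr.
by rewrite mulNmx scalerN mulmxA.
Qed.

Definition Dm n (eta : seq 'I_(2 * n)) : 'M[C]_(2 * n) :=
  diag_mx (\row_nu ((-1) ^+ (size eta + (nu \in eta)))).

Lemma config_cv n (eta : seq 'I_(2 * n)) (x : 'rV[C]_(2 * n)) : uniq eta ->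
  config_op C eta *m cv x = cv (x *m Dm eta) *m config_op C eta.
Proof.
move=> ue; rewrite /cv mulmx_sumr mulmx_suml; apply: eq_bigr => nu _.
rewrite -scalemxAr config_comm count_uniq_mem // scalerA mul_mx_diag !mxE.
by rewrite -scalemxAl.
Qed.

Lemma Pl_cat n (s1 s2 : seq 'rV[C]_(2 * n)) : Pl (s1 ++ s2) = Pl s1 *m Pl s2.
Proof. by elim: s1 => [|v s IH] /=; rewrite ?mul1mx // IH mulmxA. Qed.

Lemma config_Pl n (eta : seq 'I_(2 * n)) ys : uniq eta ->
  config_op C eta *m Pl ys = Pl (map (fun y => y *m Dm eta) ys) *m config_op C eta.
Proof.
move=> ue; elim: ys => [|y ys IH] /=; first by rewrite mulmx1 mul1mx.
by rewrite mulmxA config_cv // -mulmxA IH mulmxA.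
Qed.

Lemma Dm_sq n (eta : seq 'I_(2 * n)) : Dm eta *m (Dm eta)^T = 1%:M.
Proof.
rewrite /Dm tr_diag_mx mulmx_diag; apply/matrixP => i j; rewrite !mxE.
by rewrite -exprD addnn -signr_odd odd_double expr0.
Qed.

Lemma dotD n (eta : seq 'I_(2 * n)) (x y : 'rV[C]_(2 * n)) :
  dot (x *m Dm eta) (y *m Dm eta) = dot x y.
Proof. by rewrite /dot trmx_mul mulmxA -[x *m _ *m _]mulmxA Dm_sq mulmx1. Qed.

Lemma dot_row N (w : 'M[C]_N) a b : dot (row a w) (row b w) = (w *m w^T) a b.
Proof. by rewrite /dot !mxE; apply: eq_bigr => l _; rewrite !mxE. Qed.

End M.

Section M4.
Variable C : numClosedFieldType.

Lemma conjU n (U : 'M[C]_(dim2 n)) (u : 'M[C]_(2 * n)) :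
  adj U *m U = 1%:M -> U *m adj U = 1%:M ->
  (forall mu : 'I_(2 * n), adj U *m majorana C mu *m U = \sum_nu u mu nu *: majorana C nu) ->
  forall s, adj U *m config_op C s *m U = Pl [seq row mu u | mu <- s].
Proof.
move=> h1 h2 hm; elim => [|mu s IH] /=; first by rewrite mulmx1.
have -> : adj U *m (majorana C mu *m config_op C s) *m U
  = (adj U *m majorana C mu *m U) *m (adj U *m config_op C s *m U).
  by rewrite !mulmxA -[adj U *m majorana C mu *m U *m adj U]mulmxA h2 mulmx1.
rewrite IH hm; congr (_ *m _); rewrite /cv; apply: eq_bigr => nu _; rewrite mxE //.
Qed.

Lemma config_Pl_e n (s : seq 'I_(2 * n)) :
  config_op C s = Pl [seq row mu (1%:M : 'M[C]_(2 * n)) | mu <- s].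
Proof.
elim: s => [|mu s IH] //=; rewrite IH; congr (_ *m _).
rewrite /cv (bigD1 mu) //= big1 ?addr0 ?mxE ?eqxx ?scale1r // => nu ne.
by rewrite !mxE eq_sym (negbTE ne) scale0r.
Qed.

Lemma gram_orth N (w : 'M[C]_N) (s : seq 'I_N) (x0 : 'I_N) :
  w *m w^T = 1%:M -> uniq s ->
  forall i j, (i < size s)%N -> (j < size s)%N ->
  dot (nth 0 [seq row mu w | mu <- s] i) (nth 0 [seq row mu w | mu <- s] j) = (i == j)%:R.
Proof.
move=> hw us i j hi hj.
by rewrite !(nth_map x0) // dot_row hw mxE nth_uniq.
Qed.

Lemma rowsub_row n (u : 'M[C]_(2 * n)) (s : seq 'I_(2 * n)) (x0 : 'I_(2 * n)) (i : 'I_(size s)) :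
  row i (rowsub_seq u s) = row (nth x0 s i) u.
Proof.
by apply/rowP => l; rewrite !mxE (set_nth_default x0).
Qed.

Lemma entry_mul3 m p q (A : 'M[C]_(m, p)) (B : 'M[C]_p) (D : 'M[C]_(q, p)) i j :
  (A *m B *m D^T) i j = (row i A *m B *m (row j D)^T) 0 0.
Proof. by rewrite -!row_mul !mxE; apply: eq_bigr => l _; rewrite !mxE. Qed.

Lemma Dm_proj n (eta : seq 'I_(2 * n)) :
  Dm C eta = (-1) ^+ (size eta) *: (1%:M - 2 *: proj_modes C eta).
Proof.
apply/matrixP => i j; rewrite /Dm /proj_modes !mxE exprD.
case: (eqVneq i j) => [->|ne] /=; last by rewrite !mulr0n mulr0 subr0 mulr0.
by case: (j \in eta); rewrite /= ?mulr1n ?expr1 ?expr0 ?mulr1 ?subr0 ?mulr0 ?subr0 ?mulr1 //; congr (_ * _); ring.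
Qed.

Lemma gram_R n (u : 'M[C]_(2 * n)) (eta s : seq 'I_(2 * n)) (x0 : 'I_(2 * n)) :
  gram (size s) [seq row mu u *m Dm C eta | mu <- s] [seq row mu u | mu <- s]
  = rowsub_seq u s *m Dm C eta *m (rowsub_seq u s)^T.
Proof.
apply/matrixP => i j; rewrite entry_mul3 !(rowsub_row _ x0) mxE.
by rewrite (nth_map x0) // (nth_map x0).
Qed.

Lemma dim2E n : dim2 n = (2 ^ n)%N.
Proof. by elim: n => //= n ->; rewrite expnS. Qed.

Lemma tr1_neq0 n : \tr (1%:M : 'M[C]_(dim2 n)) != 0.
Proof. by rewrite mxtrace1 pnatr_eq0 dim2E expn_eq0. Qed.

End M4.

Unset Implicit Arguments. Set Strict Implicit.
Theorem theorem1 (C : numClosedFieldType) (n : nat) (hn : (1 <= n)%N)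
  (U : 'M[C]_(dim2 n)) (u : 'M[C]_(2 * n))
  (hU : adj U *m U = 1%:M)
  (hu_real : forall i j, u i j \is Num.real)
  (hu_orth : u *m u^T = 1%:M)
  (hu_det : \det u = 1)
  (hmatch : forall mu : 'I_(2 * n),
     adj U *m majorana C mu *m U = \sum_(nu < 2 * n) u mu nu *: majorana C nu)
  (eta alpha : seq 'I_(2 * n))
  (heta : majorana_config eta) (halpha : majorana_config alpha)
  (a b : int)
  (A := 'i ^ a *: config_op C eta) (B := 'i ^ b *: config_op C alpha)
  (hA : adj A = A) (hB : adj B = B) :
  (2 ^+ (n + 2))^-1 * frob2 (commutator A (adj U *m B *m U))
  = 2^-1 * (1 + (-1) ^+ (size alpha * size eta + 1)%N *
       \det (rowsub_seq u alpha *m (1%:M - 2 *: proj_modes C eta)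
             *m (rowsub_seq u alpha)^T)).
Proof.
have hUU : U *m adj U = 1%:M by apply: mulmx1C.
have tr_ltn : transitive (fun x y : 'I_(2 * n) => (x < y)%N).
  by move=> y x z; apply: ltn_trans.
have irr_ltn : irreflexive (fun x y : 'I_(2 * n) => (x < y)%N) by move=> x; apply: ltnn.
have ue : uniq eta := sorted_uniq tr_ltn irr_ltn heta.
have ua : uniq alpha := sorted_uniq tr_ltn irr_ltn halpha.
have x0 : 'I_(2 * n) by exists 0%N; rewrite muln_gt0.
have AA : A *m A = 1%:M := herm_sq (ipow_norm C a) hA.
have BB : B *m B = 1%:M := herm_sq (ipow_norm C b) hB.
set X := adj U *m B *m U.
have hX : adj X = X by rewrite /X !adj_mul adjK hB mulmxA.
have XX : X *m X = 1%:M.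
  rewrite /X !mulmxA -[adj U *m B *m U *m adj U]mulmxA hUU mulmx1.
  by rewrite -[adj U *m B *m B]mulmxA BB mulmx1.
set ws := [seq row mu u | mu <- alpha].
set vs := [seq w *m Dm C eta | w <- ws].
have hX0 : X = 'i ^ b *: Pl ws by rewrite /X /B -scalemxAr -scalemxAl (conjU hU hUU hmatch).
have hAPl : A *m Pl ws = Pl vs *m A.
  by rewrite /A -scalemxAl config_Pl // scalemxAr.
clearbody A.
have hAXA : A *m X *m A = 'i ^ b *: Pl vs.
  by rewrite hX0 -scalemxAr -scalemxAl hAPl -mulmxA AA mulmx1.
have Hsv : size vs = size alpha by rewrite !size_map.
have Hsw : size ws = size alpha by rewrite !size_map.
have Hov : forall i j, (i < size alpha)%N -> (j < size alpha)%N -> i != j ->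
    dot (nth 0 vs i) (nth 0 vs j) = 0.
  move=> i j hi hj hij; rewrite !(nth_map 0) ?Hsw // dotD.
  by rewrite (gram_orth x0 hu_orth ua hi hj) (negbTE hij).
have T : \tr (A *m X *m A *m X) = 'i ^ b * 'i ^ b * (eps C (size alpha) *
    \tr (1%:M : 'M[C]_(dim2 n)) * \det (gram (size alpha) vs ws)).
  by rewrite hAXA hX0 -scalemxAl -scalemxAr scalerA mxtraceZ -Pl_cat (wick Hsv Hsw Hov).
have Hsign : 'i ^ b * 'i ^ b * eps C (size alpha) = 1.
  set es := [seq row mu (1%:M : 'M[C]_(2 * n)) | mu <- alpha].
  have Hse : size es = size alpha by rewrite size_map.
  have h1 : (1%:M : 'M[C]_(2 * n)) *m 1%:M^T = 1%:M by rewrite trmx1 mulmx1.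
  have Hoe : forall i j, (i < size alpha)%N -> (j < size alpha)%N -> i != j ->
      dot (nth 0 es i) (nth 0 es j) = 0.
    by move=> i j hi hj hij; rewrite (gram_orth x0 h1 ua hi hj) (negbTE hij).
  have G1 : gram (size alpha) es es = 1%:M.
    by apply/matrixP => i j; rewrite !mxE (gram_orth x0 h1 ua).
  have := congr1 mxtrace BB.
  rewrite /B config_Pl_e -scalemxAl -scalemxAr scalerA mxtraceZ -Pl_cat.
  rewrite (wick Hse Hse Hoe) G1 det1 mulr1 mulrA => H.
  apply/eqP; rewrite -subr_eq0; apply/eqP; apply: (mulIf (tr1_neq0 C n)).
  by rewrite mulrBl H mul1r subrr mul0r.
clearbody X.
rewrite /frob2 /commutator adjB !adj_mul hA hX.
have t1 : \tr (X *m A *m (A *m X)) = \tr (1%:M : 'M[C]_(dim2 n)).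
  by rewrite mulmxA -[X *m A *m A]mulmxA AA mulmx1 XX.
have t2 : \tr (X *m A *m (X *m A)) = \tr (A *m X *m A *m X).
  by rewrite !mulmxA -!mulmxA mxtrace_mulC !mulmxA.
have t3 : \tr (A *m X *m (A *m X)) = \tr (A *m X *m A *m X) by rewrite mulmxA.
have t4 : \tr (A *m X *m (X *m A)) = \tr (1%:M : 'M[C]_(dim2 n)).
  by rewrite mulmxA -[A *m X *m X]mulmxA XX mulmx1 AA.
have F : \tr ((X *m A - A *m X) *m (A *m X - X *m A)) =
    \tr (1%:M : 'M[C]_(dim2 n)) - \tr (A *m X *m A *m X) - (\tr (A *m X *m A *m X) - \tr (1%:M : 'M[C]_(dim2 n))).
  by rewrite mulmxBl !mulmxBr !raddfB /= t1 t2 t3 t4.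
rewrite F T.
have G : gram (size alpha) vs ws = (-1) ^+ (size eta) *:
    (rowsub_seq u alpha *m (1%:M - 2 *: proj_modes C eta) *m (rowsub_seq u alpha)^T).
  rewrite /vs /ws -map_comp (gram_R u eta alpha x0) Dm_proj.
  by rewrite -scalemxAr -scalemxAl.
rewrite G detZ -exprM [(size eta * _)%N]mulnC.
set d := \det _.
rewrite mxtrace1 dim2E natrX exprD [(-1) ^+ (_ + 1)]exprD expr1.
have Hs : forall y, 'i ^ b * 'i ^ b * (eps C (size alpha) * 2 ^+ n * y) = 2 ^+ n * y.
  by move=> y; rewrite !mulrA Hsign mul1r.
rewrite Hs.
field.
by rewrite expf_neq0 // pnatr_eq0.
Qed.
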